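(* Let $I$ be an index set and $\prec$ a linear order on $I$. Suppose $\mathcal F$ and $\mathcal G$ are two $\prec$-ordered, reduced TDDs over $I$ with $\Phi(\mathcal F)=\Phi(\mathcal G)$. Then $\mathcal F$ and $\mathcal G$ are isomorphic.
   Context: Indices take values in $\{0,1\}$; a tensor over $I$ is a map $\{0,1\}^I\to\mathbb{C}$ (tensors over subsets of $I$ are regarded as tensors over $I$ not depending on the other indices). Each index $x$ is regarded as the tensor $x(c)=c$, and $\overline{x}(c):=1-c$; operations on tensors are pointwise. A TDD over $I$ is $\mathcal F=(V,E,index,value,low,high,w)$: a rooted directed acyclic graph with finite node set $V$ partitioned into non-terminal nodes $V_N$ and terminal nodes $V_T$, root $r_{\mathcal F}$; $index:V_N\to I$; $value:V_T\to\mathbb{C}$; $low,high:V_N\to V$; edges are the low-edges $(v,low(v))$ and high-edges $(v,high(v))$, $v\in V_N$, plus a unique source-less incoming edge $e_r$ of the root; $w$ gives each edge a complex weight and $w_{\mathcal F}:=w(e_r)$. Node tensors: $\Phi(v)=value(v)$ for terminal $v$; otherwise $\Phi(v)=w_0\overline{x_v}\Phi(low(v))+w_1x_v\Phi(high(v))$ with $x_v=index(v)$ and $w_0,w_1$ the low-/high-edge weights. The TDD represents $\Phi(\mathcal F):=w_{\mathcal F}\Phi(r_{\mathcal F})$. $\mathcal F$ is $\prec$-ordered if for every non-terminal node $v$, $index(v)\prec index(low(v))$ whenever $low(v)$ is non-terminal and $index(v)\prec index(high(v))$ whenever $high(v)$ is non-terminal. Normality (w.r.t. $\prec$): the pivot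 of a tensor $\phi$ is the lexicographically smallest (compare at the $\prec$-smallest differing index, $0<1$) $\vec a$ with $|\phi(\vec a)|=\max_{\vec b}|\phi(\vec b)|$; $\phi$ is normal if $\phi=0$ or $\phi$ equals $1$ at its pivot. A TDD is normal if $\Phi(v)$ is normal for every node $v$. A TDD is reduced if it is normal and (1) $\Phi(v)\neq0$ for every node $v$; (2) all edges of weight $0$ point to the unique terminal node, which has value $1$; (3) $\Phi(u)\neq\Phi(v)$ for any two distinct nodes $u\neq v$. Two TDDs are isomorphic if there is a graph isomorphism between them (including the root edges $e_r$) preserving node indices, edge weights and terminal values, and mapping low-edges to low-edges and high-edges to high-edges. *)

(* Defs.v *)
From mathcomp Require Import all_boot all_order all_algebra.
From mathcomp Require Import complex Rstruct.
From Stdlib Require Import Reals.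
Set Implicit Arguments.
Unset Strict Implicit.
Unset Printing Implicit Defensive.
Import GRing.Theory Num.Theory.
Local Open Scope ring_scope.

Definition CC : numClosedFieldType := (Rdefinitions.R)[i].

Section TDDDefs.
Variable I : finType.

Definition assignment := {ffun I -> bool}.
Definition tensor := assignment -> CC.

Definition idx_tensor (x : I) : tensor := fun c => (c x : nat)%:R.

Definition strict_linear_order (lt : rel I) : Prop :=
  [/\ irreflexive lt, transitive lt &
      forall i j, i != j -> lt i j || lt j i].

Definition lex_lt (lt : rel I) (a b : assignment) : Prop :=
  exists i, [/\ a i = false, b i = true & forall j, lt j i -> a j = b j].

Definition is_pivot (lt : rel I) (phi : tensor) (a : assignment) : Prop :=
  (forall b, `|phi b| <= `|phi a|) /\
  (forall b, `|phi b| = `|phi a| -> b <> a -> lex_lt lt a b).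

Definition normal_tensor (lt : rel I) (phi : tensor) : Prop :=
  phi = (fun _ => 0) \/ exists a, is_pivot lt phi a /\ phi a = 1.

(* For a non-terminal node v: index v, low v, high v, and the weights
   wlow v / whigh v of its low-/high-edge.  wroot is the weight of the
   root edge e_r. *)
Record TDD := MkTDD {
  VN : finType;
  VT : finType;
  root : (VN + VT)%type;
  index : VN -> I;
  value : VT -> CC;
  low : VN -> (VN + VT)%type;
  high : VN -> (VN + VT)%type;
  wlow : VN -> CC;
  whigh : VN -> CC;
  wroot : CC
}.

Definition node (F : TDD) : finType := (VN F + VT F)%type.

Definition tdd_edge (F : TDD) : rel (node F) :=
  fun u w => match u with
             | inl v => (w == low v) || (w == high v)
             | inr _ => false
             end.

Definition rooted_dag (F : TDD) : Prop :=
  (forall u : node F, connect (@tdd_edge F) (root F) u) /\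
  (forall u w : node F, tdd_edge u w -> ~~ connect (@tdd_edge F) w u).

(* node tensors, by recursion with fuel (the fuel #|node F| suffices on a DAG) *)
Fixpoint phi_fuel (F : TDD) (n : nat) (u : node F) : tensor :=
  match u with
  | inr t => fun _ => value t
  | inl v =>
      match n with
      | 0 => fun _ => 0
      | n'.+1 => fun c =>
          wlow v * (1 - idx_tensor (index v) c) * phi_fuel n' (low v) c
          + whigh v * idx_tensor (index v) c * phi_fuel n' (high v) c
      end
  end.

Definition Phi_node (F : TDD) (u : node F) : tensor := phi_fuel #|{: node F}| u.

Definition Phi (F : TDD) : tensor := fun c => wroot F * Phi_node (root F) c.

Definition ordered (lt : rel I) (F : TDD) : Prop :=
  forall v : VN F,
    (forall u, low v = inl u -> lt (index v) (index u)) /\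
    (forall u, high v = inl u -> lt (index v) (index u)).

Definition normal_tdd (lt : rel I) (F : TDD) : Prop :=
  forall u : node F, normal_tensor lt (Phi_node u).

Definition zero_edge_ok (F : TDD) (target : node F) : Prop :=
  exists t : VT F, [/\ target = inr t, value t = 1 & forall t' : VT F, t' = t].

Definition reduced (lt : rel I) (F : TDD) : Prop :=
  [/\ normal_tdd lt F,
      (forall u : node F, Phi_node u <> (fun _ => 0)),
      (wroot F = 0 -> zero_edge_ok (root F)) /\
      (forall v : VN F, (wlow v = 0 -> zero_edge_ok (low v)) /\
                        (whigh v = 0 -> zero_edge_ok (high v))) &
      (forall u w : node F, u <> w -> Phi_node u <> Phi_node w)].

Definition tdd_isomorphic (F G : TDD) : Prop :=
  exists (fN : VN F -> VN G) (fT : VT F -> VT G),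
    let f (u : node F) : node G :=
      match u with inl v => inl (fN v) | inr t => inr (fT t) end in
    [/\ bijective fN, bijective fT,
        f (root F) = root G /\ wroot F = wroot G,
        (forall t, value (fT t) = value t) &
        (forall v, [/\ index (fN v) = index v,
                       low (fN v) = f (low v), high (fN v) = f (high v),
                       wlow (fN v) = wlow v & whigh (fN v) = whigh v])].

Definition is_TDD (F : TDD) : Prop := rooted_dag F.

End TDDDefs.

(* Main.v *)
Require Import Defs.
From mathcomp Require Import all_boot all_order all_algebra.
From mathcomp Require Import complex Rstruct ring.
From Stdlib Require Import Classical FunctionalExtensionality ClassicalEpsilon.
Set Implicit Arguments.
Unset Strict Implicit.
Unset Printing Implicit Defensive.
Import Order.TTheory GRing.Theory Num.Theory.
Local Open Scope ring_scope.
Set Default Proof Using "All".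

Section Gen.
Variable I : finType.
Variable lt : rel I.
Hypothesis Hlt : strict_linear_order lt.

Lemma lt_irr i : ~~ lt i i.
Proof. by case: Hlt => irr _ _; rewrite irr. Qed.

Lemma lt_trans i j k : lt i j -> lt j k -> lt i k.
Proof. case: Hlt => _ tr _ h1 h2; exact: (tr _ _ _ h1 h2). Qed.

Lemma lt_asym i j : lt i j -> lt j i -> False.
Proof. move=> h1 h2; have := lt_trans h1 h2; by rewrite (negbTE (lt_irr i)). Qed.

Lemma lt_total i j : i != j -> lt i j || lt j i.
Proof. by case: Hlt => _ _ t; apply: t. Qed.

Lemma lex_asym a b : lex_lt lt a b -> lex_lt lt b a -> False.
Proof.
case=> i [ai bi hi] [k [bk ak hk]].
have ik : i != k by apply/eqP => e; subst; rewrite ai in ak.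
case/orP: (lt_total ik) => h.
- by move: (hk _ h); rewrite ai bi.
- by move: (hi _ h); rewrite ak bk.
Qed.

Definition zero_t : tensor I := fun _ => 0.

Lemma nonzero_ex (phi : tensor I) : phi <> zero_t -> exists c, phi c != 0.
Proof.
move=> h; apply: NNPP => hn; apply: h; apply: functional_extensionality => c.
have [->//|hc] := eqVneq (phi c) 0.
by exfalso; apply: hn; exists c.
Qed.

Lemma normal_scale (phi psi : tensor I) (r : CC) :
  normal_tensor lt phi -> normal_tensor lt psi -> phi <> zero_t -> psi <> zero_t ->
  (forall c, phi c = r * psi c) -> phi = psi.
Proof.
move=> n1 n2 nz1 nz2 e.
case: n1 => [h|[a [[amax apiv] pa]]]; first by exfalso; exact: nz1 h.
case: n2 => [h|[b [[bmax bpiv] pb]]]; first by exfalso; exact: nz2 h.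
have r0 : r != 0.
  apply/eqP => r0; apply: nz1; apply: functional_extensionality => c.
  by rewrite e r0 mul0r.
have nm : forall c, `|phi c| = `|r| * `|psi c| by move=> c; rewrite e normrM.
have rp : 0 < `|r| by rewrite normr_gt0.
have ab : a = b.
  apply: NNPP => hab.
  have h1 : `|psi a| = `|psi b|.
    apply/le_anti; rewrite bmax /=.
    by have := amax b; rewrite !nm ler_pM2l.
  have h2 : `|phi b| = `|phi a| by rewrite !nm h1.
  apply: (@lex_asym a b).
  - exact: (apiv b h2 (fun e' => hab (esym e'))).
  - exact: (bpiv a h1 hab).
subst b.
have r1 : r = 1 by move: (e a); rewrite pa pb mulr1.
by apply: functional_extensionality => c; rewrite e r1 mul1r.
Qed.

Lemma scale_eq (phi psi : tensor I) (k k' : CC) :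
  normal_tensor lt phi -> normal_tensor lt psi -> phi <> zero_t -> psi <> zero_t ->
  (forall c, k * phi c = k' * psi c) -> k = k' /\ (k = 0 \/ phi = psi).
Proof.
move=> n1 n2 nz1 nz2 e.
have [k0|k0] := eqVneq k 0.
  subst k; split; last by left.
  have [c pc] := nonzero_ex nz2.
  move: (e c); rewrite mul0r => /esym/eqP; rewrite mulf_eq0 (negbTE pc) orbF.
  by move/eqP.
have ep : phi = psi.
  apply: (normal_scale (r := k' / k)) => // c.
  rewrite -(mulKf k0 (phi c)) e.
  by rewrite mulrA [k^-1 * k']mulrC.
split; last by right.
have [c pc] := nonzero_ex nz1.
move: (e c); rewrite ep; rewrite ep in pc.
by move/(mulIf pc).
Qed.

Definition upd (c : assignment I) i b : assignment I :=
  [ffun j => if j == i then b else c j].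

Section OneTDD.
Variable F : TDD I.
Hypothesis HF : is_TDD F.
Hypothesis HoF : ordered lt F.
Hypothesis HrF : reduced lt F.

Definition reach (u : node F) := [set w | connect (@tdd_edge I F) u w].
Definition D u := #|reach u|.

Lemma D_pos u : (0 < D u)%N.
Proof. rewrite /D card_gt0; apply/set0Pn; exists u; by rewrite inE connect0. Qed.

Lemma D_edge u w : tdd_edge u w -> (D w < D u)%N.
Proof.
move=> e; apply: proper_card; rewrite properE; apply/andP; split.
- apply/subsetP => x; rewrite !inE => hx; exact: connect_trans (connect1 e) hx.
- case: HF => _ acyc.
  apply/subsetPn; exists u; by rewrite !inE ?connect0 // (acyc u w e).
Qed.

Lemma edge_low v : tdd_edge (inl v : node F) (low v).
Proof. by rewrite /tdd_edge eqxx. Qed.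
Lemma edge_high v : tdd_edge (inl v : node F) (high v).
Proof. by rewrite /tdd_edge eqxx orbT. Qed.

Lemma fuel_inr n t : phi_fuel n (inr t : node F) = fun _ => value t.
Proof. by case: n. Qed.

Lemma fuel_stable n m (u : node F) : (D u <= n)%N -> (D u <= m)%N -> phi_fuel n u = phi_fuel m u.
Proof.
elim: n m u => [|n IH] m [v|t] hn hm; try by rewrite !fuel_inr.
- by have := D_pos (inl v); rewrite ltnNge hn.
- case: m hm => [|m] hm; first by have := D_pos (inl v); rewrite ltnNge hm.
  have hl := D_edge (edge_low v); have hh := D_edge (edge_high v).
  rewrite /= (IH m (low v)) ?(IH m (high v)) // -ltnS.
  all: first [exact: leq_trans hh hm | exact: leq_trans hh hn | exact: leq_trans hl hm | exact: leq_trans hl hn].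
Qed.

Lemma Phi_fuel n (u : node F) : (D u <= n)%N -> phi_fuel n u = Phi_node u.
Proof. move=> h; apply: fuel_stable => //; exact: max_card. Qed.

Lemma PhiE v c : Phi_node (inl v : node F) c =
  wlow v * (1 - idx_tensor (Defs.index v) c) * Phi_node (low v) c
  + whigh v * idx_tensor (Defs.index v) c * Phi_node (high v) c.
Proof.
have hl := D_edge (edge_low v); have hh := D_edge (edge_high v).
rewrite -(Phi_fuel (leqnn (D (inl v)))).
move: hl hh; case: (D (inl v)) => [|k] hl hh; first by rewrite ltn0 in hl.
by rewrite /= !Phi_fuel.
Qed.

Lemma PhiT t c : Phi_node (inr t : node F) c = value t.
Proof. by rewrite /Phi_node fuel_inr. Qed.

Lemma fuel_support n v (c c' : assignment I) :
  (forall j, (j == Defs.index v) || lt (Defs.index v) j -> c j = c' j) ->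
  phi_fuel n (inl v : node F) c = phi_fuel n (inl v : node F) c'.
Proof.
elim: n v c c' => [//|n IH] v c c' h /=.
have hv : c (Defs.index v) = c' (Defs.index v) by apply: h; rewrite eqxx.
have child : forall u, (u = low v \/ u = high v) -> phi_fuel n u c = phi_fuel n u c'.
  move=> [w|t] hu; last by rewrite fuel_inr.
  apply: IH => j hj; apply: h.
  have hw : lt (Defs.index v) (Defs.index w).
    by case: hu => hu; case: (HoF v) => H1 H2; [apply: H1 | apply: H2]; rewrite hu.
  case/orP: hj => [/eqP ->|hj]; first by rewrite hw orbT.
  by rewrite (lt_trans hw hj) orbT.
by rewrite /idx_tensor hv (child (low v)) ?(child (high v)); auto.
Qed.

Lemma Phi_support v (c c' : assignment I) :
  (forall j, (j == Defs.index v) || lt (Defs.index v) j -> c j = c' j) ->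
  Phi_node (inl v : node F) c = Phi_node (inl v : node F) c'.
Proof. exact: fuel_support. Qed.

Lemma indep (u : node F) i : (forall w, u = inl w -> lt i (Defs.index w)) ->
  forall c b, Phi_node u (upd c i b) = Phi_node u c.
Proof.
move=> h c b; case: u h => [w|t] h; last by rewrite !PhiT.
apply: Phi_support => j hj; rewrite /upd ffunE.
case: eqP => // ji; subst j; exfalso.
have hw := h w erefl.
case/orP: hj => [/eqP e|hj].
- by rewrite e (negbTE (lt_irr _)) in hw.
- exact: lt_asym hw hj.
Qed.

Lemma low_gt (v : VN F) : forall w, low v = inl w -> lt (Defs.index v) (Defs.index w).
Proof. by case: (HoF v). Qed.
Lemma high_gt (v : VN F) : forall w, high v = inl w -> lt (Defs.index v) (Defs.index w).
Proof. by case: (HoF v). Qed.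

Lemma PhiE_low v c : Phi_node (inl v : node F) (upd c (Defs.index v) false) = wlow v * Phi_node (low v) c.
Proof.
rewrite PhiE /idx_tensor /upd ffunE eqxx /=.
rewrite -/(upd c (Defs.index v) false) (indep (low_gt (v:=v))) (indep (high_gt (v:=v))).
by rewrite subr0 mulr1 mulr0 mul0r addr0.
Qed.

Lemma PhiE_high v c : Phi_node (inl v : node F) (upd c (Defs.index v) true) = whigh v * Phi_node (high v) c.
Proof.
rewrite PhiE /idx_tensor /upd ffunE eqxx /=.
rewrite -/(upd c (Defs.index v) true) (indep (low_gt (v:=v))) (indep (high_gt (v:=v))).
by rewrite subrr mulr0 mul0r add0r mulr1.
Qed.

Lemma value1 (t : VT F) : value t = 1.
Proof.
case: HrF => nrm nz _ _.
case: (nrm (inr t)) => [h|[a [_ pa]]]; last by move: pa; rewrite PhiT.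
by exfalso; apply: (nz (inr t)); exact: h.
Qed.

Lemma node_eq (u w : node F) : Phi_node u = Phi_node w -> u = w.
Proof. case: HrF => _ _ _ dist e; apply: NNPP => ne; exact: dist _ _ ne e. Qed.

Lemma term_uniq (t t' : VT F) : t = t'.
Proof.
have : (inr t : node F) = inr t'.
  apply: node_eq; apply: functional_extensionality => c; by rewrite !PhiT !value1.
by case.
Qed.

Lemma low_neq (v : VN F) : low v <> inl v.
Proof.
case: HF => _ acyc e; have := acyc _ _ (edge_low v); by rewrite e connect0.
Qed.

Lemma zero_target (u : node F) : zero_edge_ok u -> Phi_node u = fun _ => 1.
Proof.
case=> t [-> _ _]; apply: functional_extensionality => c; by rewrite PhiT value1.
Qed.

Lemma ess v : exists c, Phi_node (inl v : node F) (upd c (Defs.index v) false)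
                      <> Phi_node (inl v : node F) (upd c (Defs.index v) true).
Proof.
apply: NNPP => hn.
have eq : forall c, wlow v * Phi_node (low v) c = whigh v * Phi_node (high v) c.
  move=> c; rewrite -PhiE_low -PhiE_high; apply: NNPP => h; apply: hn; by exists c.
case: HrF => nrm nz [_ wz] dist.
have [e1 e2] := scale_eq (nrm _) (nrm _) (nz _) (nz _) eq.
case: e2 => [w0|elh].
  apply: (nz (inl v)); apply: functional_extensionality => c.
  by rewrite PhiE -e1 w0 !mul0r addr0.
have lh : low v = high v := node_eq elh.
have e3 : forall c, 1 * Phi_node (inl v : node F) c = wlow v * Phi_node (low v) c.
  move=> c; rewrite mul1r PhiE -lh -e1; ring.
have [e4 e5] := scale_eq (nrm _) (nrm _) (nz _) (nz _) e3.
case: e5 => [/eqP|e5]; first by rewrite oner_eq0.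
by apply: (@low_neq v); apply: node_eq; rewrite e5.
Qed.

Lemma root_zero : wroot F = 0 -> Phi_node (Defs.root F) = fun _ => 1.
Proof. by case: HrF => _ _ [wz _] _ h; apply: zero_target; apply: wz. Qed.

Lemma wlow_zero (v : VN F) : wlow v = 0 -> Phi_node (low v) = fun _ => 1.
Proof. by case: HrF => _ _ [_ wz] _ h; apply: zero_target; apply: (wz v).1. Qed.

Lemma whigh_zero (v : VN F) : whigh v = 0 -> Phi_node (high v) = fun _ => 1.
Proof. by case: HrF => _ _ [_ wz] _ h; apply: zero_target; apply: (wz v).2. Qed.

End OneTDD.

Section Two0.
Variables F G : TDD I.
Hypotheses (HF : is_TDD F) (HoF : ordered lt F) (HrF : reduced lt F).
Hypotheses (HG : is_TDD G) (HoG : ordered lt G) (HrG : reduced lt G).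

Lemma ess_index (v : VN F) (v' : VN G) :
  Phi_node (inl v : node F) = Phi_node (inl v' : node G) ->
  ~ lt (Defs.index v) (Defs.index v').
Proof.
move=> e h; have [c hc] := ess HF HoF HrF v; apply: hc; rewrite !e.
apply: (Phi_support HG HoG HrG) => j hj; rewrite /upd !ffunE.
case: eqP => // ji; subst j; exfalso.
case/orP: hj => [/eqP ee|hj].
- by rewrite ee (negbTE (lt_irr _)) in h.
- exact: lt_asym h hj.
Qed.

End Two0.

Section Two.
Variables F G : TDD I.
Hypotheses (HF : is_TDD F) (HoF : ordered lt F) (HrF : reduced lt F).
Hypotheses (HG : is_TDD G) (HoG : ordered lt G) (HrG : reduced lt G).

Lemma match_nodes (u : node F) (u' : node G) : Phi_node u = Phi_node u' ->
  match u, u' with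
  | inl v, inl v' => [/\ Defs.index v' = Defs.index v, wlow v' = wlow v, whigh v' = whigh v,
                        Phi_node (low v') = Phi_node (low v) &
                        Phi_node (high v') = Phi_node (high v)]
  | inr _, inr _ => True
  | _, _ => False
  end.
Proof.
case: u u' => [v|t] [v'|t'] e //.
- have ii : Defs.index v' = Defs.index v.
    apply/eqP; apply: NNPP => /negP ne; case/orP: (lt_total ne) => h.
    + exact: (ess_index HG HoG HrG HF HoF HrF (esym e) h).
    + exact: (ess_index HF HoF HrF HG HoG HrG e h).
  have el : forall c, wlow v * Phi_node (low v) c = wlow v' * Phi_node (low v') c.
    by move=> c; rewrite -(PhiE_low HF HoF HrF) -(PhiE_low HG HoG HrG) ii e.
  have eh : forall c, whigh v * Phi_node (high v) c = whigh v' * Phi_node (high v') c.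
    by move=> c; rewrite -(PhiE_high HF HoF HrF) -(PhiE_high HG HoG HrG) ii e.
  case: (HrF) => nF zF _ _; case: (HrG) => nG zG _ _.
  have [wl1 wl2] := scale_eq (nF _) (nG _) (zF _) (zG _) el.
  have [wh1 wh2] := scale_eq (nF _) (nG _) (zF _) (zG _) eh.
  split => //.
  + case: wl2 => [w0|->] //.
    rewrite (wlow_zero HF HoF HrF w0) (wlow_zero HG HoG HrG) //; by rewrite -wl1.
  + case: wh2 => [w0|->] //.
    rewrite (whigh_zero HF HoF HrF w0) (whigh_zero HG HoG HrG) //; by rewrite -wh1.
- have [c hc] := ess HF HoF HrF v; apply: hc; rewrite e.
  by rewrite !(PhiT HG HoG HrG).
- have [c hc] := ess HG HoG HrG v'; apply: hc; rewrite -e.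
  by rewrite !(PhiT HF HoF HrF).
Qed.

Hypothesis ePhi : Phi F = Phi G.

Lemma root_match : wroot F = wroot G /\
  Phi_node (Defs.root F) = Phi_node (Defs.root G).
Proof.
have e : forall c, wroot F * Phi_node (Defs.root F) c = wroot G * Phi_node (Defs.root G) c.
  by move=> c; move: (f_equal (fun f => f c) ePhi); rewrite /Phi.
case: (HrF) => nF zF _ _; case: (HrG) => nG zG _ _.
have [w1 w2] := scale_eq (nF _) (nG _) (zF _) (zG _) e.
split => //; case: w2 => [w0|//].
rewrite (root_zero HF HoF HrF w0) (root_zero HG HoG HrG) //; by rewrite -w1.
Qed.

Lemma exists_match (u : node F) : exists u' : node G, Phi_node u = Phi_node u'.
Proof.
case: (HF) => reach _.
have := reach u; case/connectP => p pth ->.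
have er := (root_match).2.
elim: p (Defs.root F) (Defs.root G) er pth => [|w p IH] x x' ex /=.
  by move=> _; exists x'.
case/andP => exw pth.
case: x ex exw => [v|t] ex exw //.
case: x' ex => [v'|t'] ex; last by have := match_nodes ex.
have [_ _ _ hl hh] := match_nodes ex.
case/orP: exw => /eqP ew; subst w.
- exact: (IH _ (low v') (esym hl) pth).
- exact: (IH _ (high v') (esym hh) pth).
Qed.

Lemma existsN (v : VN F) : exists v' : VN G, Phi_node (inl v : node F) = Phi_node (inl v' : node G).
Proof.
have [[v'|t'] e] := exists_match (inl v); first by exists v'.
by have := match_nodes e.
Qed.

Lemma existsT (t : VT F) : exists t' : VT G, Phi_node (inr t : node F) = Phi_node (inr t' : node G).
Proof.
have [[v'|t'] e] := exists_match (inr t); last by exists t'.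
by have := match_nodes e.
Qed.

End Two.

End Gen.
Theorem theorem3 (I : finType) (lt : rel I) (F G : TDD I) :
  strict_linear_order lt ->
  is_TDD F -> is_TDD G ->
  ordered lt F -> ordered lt G ->
  reduced lt F -> reduced lt G ->
  Phi F = Phi G ->
  tdd_isomorphic F G.
Proof.
move=> Hlt HF HG HoF HoG HrF HrG ePhi.
pose cN v := constructive_indefinite_description _
   (existsN Hlt HF HoF HrF HG HoG HrG ePhi v).
pose fN v := proj1_sig (cN v).
have hfN : forall v, Phi_node (inl v : node F) = Phi_node (inl (fN v) : node G).
  move=> v; exact: (proj2_sig (cN v)).
pose dN v := constructive_indefinite_description _
   (existsN Hlt HG HoG HrG HF HoF HrF (esym ePhi) v).
pose gN v := proj1_sig (dN v).
have hgN : forall v, Phi_node (inl v : node G) = Phi_node (inl (gN v) : node F).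
  move=> v; exact: (proj2_sig (dN v)).
pose fT t := proj1_sig (constructive_indefinite_description _
   (existsT Hlt HF HoF HrF HG HoG HrG ePhi t)).
pose gT t := proj1_sig (constructive_indefinite_description _
   (existsT Hlt HG HoG HrG HF HoF HrF (esym ePhi) t)).
have hf : forall u : node F, Phi_node (match u with inl v => inl (fN v) | inr t => inr (fT t) end : node G) = Phi_node u.
  case=> [v|t]; first by rewrite hfN.
  apply: functional_extensionality => c.
  by rewrite (PhiT Hlt HF HoF HrF) (PhiT Hlt HG HoG HrG) (value1 Hlt HF HoF HrF) (value1 Hlt HG HoG HrG).
exists fN, fT => /=.
have [wr er] := root_match Hlt HF HoF HrF HG HoG HrG ePhi.
split.
- exists gN.
  + move=> v; have := node_eq Hlt HF HoF HrF (u := inl (gN (fN v))) (w := inl v).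
    by rewrite -hgN -hfN => /(_ erefl) [].
  + move=> v; have := node_eq Hlt HG HoG HrG (u := inl (fN (gN v))) (w := inl v).
    by rewrite -hfN -hgN => /(_ erefl) [].
- exists gT => t; [exact: (term_uniq Hlt HF HoF HrF) | exact: (term_uniq Hlt HG HoG HrG)].
- split => //; apply: (node_eq Hlt HG HoG HrG); by rewrite hf er.
- by move=> t; rewrite (value1 Hlt HF HoF HrF) (value1 Hlt HG HoG HrG).
- move=> v.
  have := match_nodes Hlt HF HoF HrF HG HoG HrG (hfN v).
  case=> i1 w1 w2 l1 h1; split => //.
  + by apply: (node_eq Hlt HG HoG HrG); rewrite hf l1.
  + by apply: (node_eq Hlt HG HoG HrG); rewrite hf h1.
Qed.
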